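(* Let $\mathfrak g$ be a real Lie algebra, $r\in\mathfrak g\otimes\mathfrak g$, $\alpha=(r-r^t)/2$, $\beta=(r+r^t)/2$ (as maps $\mathfrak g^*\to\mathfrak g$), and suppose $\beta$ is invariant. Let $\hat{\mathfrak g}=\mathfrak g\otimes\mathbb C=\mathfrak g\oplus i\mathfrak g$ regarded as a real Lie algebra. The following are equivalent: (1) $r$ is a solution of the type II CYBE $[r_{12},r_{13}]+[r_{12},r_{23}]+[r_{13},r_{23}]=\frac12[r_{13}+r_{31},r_{23}+r_{32}]$; (2) $[\alpha(a^* ),\alpha(b^* )]-\alpha(\mathrm{ad}^*(\alpha(a^* ))b^*-\mathrm{ad}^*(\alpha(b^* ))a^* )=[\beta(a^* ),\beta(b^* )]$ for all $a^*,b^*\in\mathfrak g^*$; (3) for the sign $+$ and for the sign $-$, $(\alpha\pm i\beta)([a^*,b^*]_\delta)=[(\alpha\pm i\beta)(a^* ),(\alpha\pm i\beta)(b^* )]_{\hat{\mathfrak g}}$ for all $a^*,b^*\in\mathfrak g^*$, where $[a^*,b^*]_\delta=\mathrm{ad}^*(\alpha(a^* ))b^*-\mathrm{ad}^*(\alpha(b^* ))a^*$ and $(\alpha\pm i\beta)(a^* )=\alpha(a^* )\pm i\beta(a^* )\in\hat{\mathfrak g}$.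
   Context: $\mathfrak g$ finite-dimensional. $r\in\mathfrak g\otimes\mathfrak g$ is identified with $r:\mathfrak g^*\to\mathfrak g$ by $\langle r(a^* ),b^*\rangle=\langle a^*\otimes b^*,r\rangle$; $r^t$ is induced by $\sigma(r)$ with $\sigma(x\otimes y)=y\otimes x$. $\beta$ invariant means $(\mathrm{ad}(x)\otimes\mathrm{id}+\mathrm{id}\otimes\mathrm{ad}(x))\beta=0$ for all $x$. $\langle\mathrm{ad}^*(x)a^*,y\rangle=-\langle a^*,[x,y]\rangle$. For $r=\sum_i a_i\otimes b_i$: $[r_{12},r_{13}]=\sum[a_i,a_j]\otimes b_i\otimes b_j$, $[r_{12},r_{23}]=\sum a_i\otimes[b_i,a_j]\otimes b_j$, $[r_{13},r_{23}]=\sum a_i\otimes a_j\otimes[b_i,b_j]$; with $r+\sigma(r)=\sum_k c_k\otimes d_k$, $[r_{13}+r_{31},r_{23}+r_{32}]=\sum_{k,l}c_k\otimes c_l\otimes[d_k,d_l]$. The bracket of $\hat{\mathfrak g}$ is $[x+iy,x'+iy']=[x,x']-[y,y']+i([x,y']+[y,x'])$. *)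

(* Defs.v *)
(* A finite-dimensional real Lie algebra g of dimension n is
   presented by its structure constants c in a basis e_0..e_{n-1}:
   [e_i, e_j] = \sum_k c i j k e_k.  Elements of g and of gdual are row vectors
   of coordinates (in the basis e, resp. the dual basis of g^, i.e. e^ ).  Tensors in
   g (x) g are n x n matrices t (t = \sum_{p,q} t p q e_p (x) e_q), and tensors
   in g (x) g (x) g are finite functions on triples of indices. *)
From HB Require Import structures.
From mathcomp Require Import all_boot all_order all_algebra.
Set Implicit Arguments. Unset Strict Implicit. Unset Printing Implicit Defensive.
Import Order.TTheory GRing.Theory Num.Theory.
Local Open Scope ring_scope.

Section LieDefs.
Variables (R : realFieldType) (n : nat).

Definition strconst := 'I_n -> 'I_n -> 'I_n -> R.

Definition lieb (c : strconst) (x y : 'rV[R]_n) : 'rV[R]_n :=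
  \row_k \sum_i \sum_j x 0 i * y 0 j * c i j k.

Definition is_lie (c : strconst) : Prop :=
  (forall x, lieb c x x = 0) /\
  (forall x y z, lieb c x (lieb c y z) + lieb c y (lieb c z x)
                 + lieb c z (lieb c x y) = 0).

Definition ebase (i : 'I_n) : 'rV[R]_n := delta_mx 0 i.

Definition pairing (a x : 'rV[R]_n) : R := \sum_i a 0 i * x 0 i.

Definition adstar (c : strconst) (x a : 'rV[R]_n) : 'rV[R]_n :=
  \row_j - pairing a (lieb c x (ebase j)).

(* a tensor r identified with a map gdual -> g via <r(a), b> = <a (x) b, r> *)
Definition tmap (r : 'M[R]_n) (a : 'rV[R]_n) : 'rV[R]_n :=
  \row_j \sum_i a 0 i * r i j.

Definition alpha (r : 'M[R]_n) (a : 'rV[R]_n) : 'rV[R]_n :=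
  2^-1 *: (tmap r a - tmap r^T a).
Definition beta (r : 'M[R]_n) (a : 'rV[R]_n) : 'rV[R]_n :=
  2^-1 *: (tmap r a + tmap r^T a).
Definition betaT (r : 'M[R]_n) : 'M[R]_n := 2^-1 *: (r + r^T).

Definition tens2 (x y : 'rV[R]_n) : {ffun 'I_n * 'I_n -> R} :=
  [ffun t => x 0 t.1 * y 0 t.2].
Definition tens3 (x y z : 'rV[R]_n) : {ffun 'I_n * 'I_n * 'I_n -> R} :=
  [ffun t => x 0 t.1.1 * y 0 t.1.2 * z 0 t.2].

Definition ad_invariant (c : strconst) (t : 'M[R]_n) : Prop :=
  forall x : 'rV[R]_n,
    \sum_p \sum_q (tens2 (t p q *: lieb c x (ebase p)) (ebase q)
                   + tens2 (t p q *: ebase p) (lieb c x (ebase q))) = 0.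

(* Writing r = \sum_{p,q} a_{pq} (x) b_{pq} with a_{pq} = r p q e_p, b_{pq} = e_q *)
Definition r12_r13 (c : strconst) (r : 'M[R]_n) :=
  \sum_p \sum_q \sum_s \sum_t
    tens3 (lieb c (r p q *: ebase p) (r s t *: ebase s)) (ebase q) (ebase t).
Definition r12_r23 (c : strconst) (r : 'M[R]_n) :=
  \sum_p \sum_q \sum_s \sum_t
    tens3 (r p q *: ebase p) (lieb c (ebase q) (r s t *: ebase s)) (ebase t).
Definition r13_r23 (c : strconst) (r : 'M[R]_n) :=
  \sum_p \sum_q \sum_s \sum_t
    tens3 (r p q *: ebase p) (r s t *: ebase s) (lieb c (ebase q) (ebase t)).
(* [r13 + r31, r23 + r32] = \sum c_k (x) c_l (x) [d_k, d_l]
   where r + sigma(r) = \sum c_k (x) d_k *)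
Definition sym13_sym23 (c : strconst) (r : 'M[R]_n) :=
  let S := r + r^T in
  \sum_p \sum_q \sum_s \sum_t
    tens3 (S p q *: ebase p) (S s t *: ebase s) (lieb c (ebase q) (ebase t)).

Definition CYBE2 (c : strconst) (r : 'M[R]_n) : Prop :=
  r12_r13 c r + r12_r23 c r + r13_r23 c r
  = [ffun t => 2^-1 * sym13_sym23 c r t].

Definition brdelta (c : strconst) (r : 'M[R]_n) (a b : 'rV[R]_n) : 'rV[R]_n :=
  adstar c (alpha r a) b - adstar c (alpha r b) a.

(* the complexification ghat = g + i g as a real Lie algebra: pairs (x, y) = x + i y *)
Definition cbr (c : strconst) (u v : 'rV[R]_n * 'rV[R]_n) : 'rV[R]_n * 'rV[R]_n :=
  (lieb c u.1 v.1 - lieb c u.2 v.2, lieb c u.1 v.2 + lieb c u.2 v.1).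

Definition alpha_i_beta (r : 'M[R]_n) (s : R) (a : 'rV[R]_n) :=
  (alpha r a, s *: beta r a).

End LieDefs.

(* Main.v *)
Require Import Defs.
From HB Require Import structures.
From mathcomp Require Import all_boot all_order all_algebra.
Set Implicit Arguments. Unset Strict Implicit. Unset Printing Implicit Defensive.
Import Order.TTheory GRing.Theory Num.Theory.
Local Open Scope ring_scope.

Lemma grp (V : zmodType) (a x y b p z w q : V) :
  a + x + (y + b) + (p - x + (- z - w)) + (q - y + (z + w)) = a + p + q + b.
Proof.
rewrite -opprD -addrA [(p - x - _) + _]addrACA addNr addr0.
rewrite [(p - x) + _]addrACA -opprD.
rewrite -!addrA; congr (_ + _).
by rewrite addrA; set s := x + y; rewrite addrC !addrA -addrA -/s addrNK [b + p]addrC addrAC.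
Qed.

Section Work.
Variables (R : realFieldType) (n : nat) (c : strconst R n).
Local Notation e := (@ebase R n).

Lemma eE i j : e i 0 j = (i == j)%:R.
Proof. by rewrite /ebase /delta_mx mxE eqxx eq_sym. Qed.

Lemma sum_el (F : 'I_n -> R) i : \sum_j e i 0 j * F j = F i.
Proof.
rewrite (bigD1 i) //= eE eqxx mul1r big1 ?addr0 // => j Hj.
by rewrite eE eq_sym (negbTE Hj) mul0r.
Qed.

Lemma sum_er (F : 'I_n -> R) i : \sum_j F j * e i 0 j = F i.
Proof. by rewrite -[RHS](sum_el F i); apply: eq_bigr => j _; rewrite mulrC. Qed.

Lemma sum_el' (F : 'I_n -> R) i : \sum_j e j 0 i * F j = F i.
Proof. by rewrite -[RHS](sum_el F i); apply: eq_bigr => j _; rewrite !eE eq_sym. Qed.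

Lemma sum_er' (F : 'I_n -> R) i : \sum_j F j * e j 0 i = F i.
Proof. by rewrite -[RHS](sum_el F i); apply: eq_bigr => j _; rewrite !eE eq_sym mulrC. Qed.

Lemma scaleE s (x : 'rV[R]_n) k : (s *: x) 0 k = s * x 0 k.
Proof. by rewrite mxE. Qed.

Lemma sw12 (F : 'I_n -> 'I_n -> 'I_n -> 'I_n -> R) :
  \sum_a \sum_b \sum_c \sum_d F a b c d = \sum_b \sum_a \sum_c \sum_d F a b c d.
Proof. exact: exchange_big. Qed.
Lemma sw23 (F : 'I_n -> 'I_n -> 'I_n -> 'I_n -> R) :
  \sum_a \sum_b \sum_c \sum_d F a b c d = \sum_a \sum_c \sum_b \sum_d F a b c d.
Proof. by apply: eq_bigr => a _; exact: exchange_big. Qed.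
Lemma sw34 (F : 'I_n -> 'I_n -> 'I_n -> 'I_n -> R) :
  \sum_a \sum_b \sum_c \sum_d F a b c d = \sum_a \sum_b \sum_d \sum_c F a b c d.
Proof. by apply: eq_bigr => a _; apply: eq_bigr => b _; exact: exchange_big. Qed.

Lemma m5a (x1 x2 x3 x4 x5 : R) : x2 * (x1 * x3 * x5) * x4 = x1 * x2 * (x3 * x4 * x5).
Proof. by rewrite -!mulrA mulrCA (mulrC x5). Qed.

Lemma m5b (x1 x2 x3 x4 x5 : R) : x1 * (x2 * x3 * x5) * x4 = x1 * x2 * (x3 * x4 * x5).
Proof. by rewrite -!mulrA (mulrC x5). Qed.

Lemma s3_23 (F : 'I_n -> 'I_n -> 'I_n -> R) :
  \sum_a \sum_b \sum_c F a b c = \sum_a \sum_c \sum_b F a b c.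
Proof. by apply: eq_bigr => a _; exact: exchange_big. Qed.

Lemma m4 (x1 x2 x3 x4 : R) : x2 * x1 * (x3 * x4) = x1 * (x2 * x3) * x4.
Proof. by rewrite (mulrC x2) -!mulrA. Qed.

Lemma m5c (x1 x2 x3 x4 x5 : R) : x1 * x2 * (x3 * x4) * x5 = x2 * (x4 * (x1 * x3 * x5)).
Proof. by rewrite (mulrC x1) -!mulrA; congr (_ * _); rewrite (mulrCA x3) (mulrCA x1). Qed.

Lemma liebE x y k : lieb c x y 0 k = \sum_i \sum_j x 0 i * y 0 j * c i j k.
Proof. by rewrite mxE. Qed.

Lemma lieb_e_r x j k : lieb c x (e j) 0 k = \sum_p x 0 p * c p j k.
Proof.
rewrite liebE; apply: eq_bigr => p _.
rewrite -[RHS](sum_el (fun q => x 0 p * c p q k) j).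
by apply: eq_bigr => q _; rewrite mulrCA mulrA.
Qed.

Lemma lieb_e_l y i k : lieb c (e i) y 0 k = \sum_q y 0 q * c i q k.
Proof.
rewrite liebE -(sum_el (fun p => \sum_j y 0 j * c p j k) i); apply: eq_bigr => p _.
by rewrite mulr_sumr; apply: eq_bigr => q _; rewrite mulrA.
Qed.

Lemma lieb_ee i j k : lieb c (e i) (e j) 0 k = c i j k.
Proof. by rewrite lieb_e_l sum_el. Qed.

Lemma liebDl x y z : lieb c (x + y) z = lieb c x z + lieb c y z.
Proof.
apply/rowP => k; rewrite !mxE -big_split; apply: eq_bigr => i _.
rewrite -big_split; apply: eq_bigr => j _ /=; by rewrite !mxE !mulrDl.
Qed.

Lemma liebDr x y z : lieb c x (y + z) = lieb c x y + lieb c x z.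
Proof.
apply/rowP => k; rewrite !mxE -big_split; apply: eq_bigr => i _.
rewrite -big_split; apply: eq_bigr => j _ /=; by rewrite !mxE mulrDr mulrDl.
Qed.

Lemma liebZl s x y : lieb c (s *: x) y = s *: lieb c x y.
Proof.
apply/rowP => k; rewrite !mxE mulr_sumr; apply: eq_bigr => i _.
rewrite mulr_sumr; apply: eq_bigr => j _ /=; by rewrite !mxE !mulrA.
Qed.

Lemma liebZr s x y : lieb c x (s *: y) = s *: lieb c x y.
Proof.
apply/rowP => k; rewrite !mxE mulr_sumr; apply: eq_bigr => i _.
rewrite mulr_sumr; apply: eq_bigr => j _ /=; by rewrite !mxE mulrCA !mulrA.
Qed.

Hypothesis Hl : is_lie c.

Lemma c_anti i j k : c j i k = - c i j k.
Proof.
have H := Hl.1 (e i + e j).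
rewrite !liebDl !liebDr !Hl.1 add0r addr0 in H. move/eqP: H; rewrite addr_eq0 => H.
have := congr1 (fun v : 'rV_n => v 0 k) (eqP H) => /=.
have oppE : forall (M : 'rV[R]_n) l, (- M) 0 l = - M 0 l by move=> M l; rewrite mxE.
rewrite oppE -(lieb_ee i j) -(lieb_ee j i) => ->; by rewrite opprK.
Qed.

Variable r : 'M[R]_n.
Fact A_key : unit. Proof. exact: tt. Qed.
Fact B_key : unit. Proof. exact: tt. Qed.
Definition A : 'I_n -> 'I_n -> R := locked_with A_key (fun i j => 2^-1 * (r i j - r j i)).
Definition B : 'I_n -> 'I_n -> R := locked_with B_key (fun i j => 2^-1 * (r i j + r j i)).
Lemma AE i j : A i j = 2^-1 * (r i j - r j i). Proof. by rewrite /A; case: A_key. Qed.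
Lemma BE i j : B i j = 2^-1 * (r i j + r j i). Proof. by rewrite /B; case: B_key. Qed.

Lemma alphaE a j : alpha r a 0 j = \sum_i a 0 i * A i j.
Proof.
rewrite /alpha !mxE -sumrB mulr_sumr; apply: eq_bigr => i _.
by rewrite AE !mxE -mulrBr mulrCA.
Qed.

Lemma betaE a j : beta r a 0 j = \sum_i a 0 i * B i j.
Proof.
rewrite /beta !mxE -big_split mulr_sumr; apply: eq_bigr => i _.
by rewrite BE !mxE /= -mulrDr mulrCA.
Qed.

Lemma betaTE i j : betaT r i j = B i j.
Proof. by rewrite BE !mxE. Qed.

Lemma rAB i j : r i j = A i j + B i j.
Proof.
rewrite AE BE -mulrDr addrACA addNr addr0 -mulr2n -[r i j *+ 2]mulr_natr mulrCA mulVf ?mulr1 //.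
by rewrite pnatr_eq0.
Qed.

Lemma adstarE x a j : adstar c x a 0 j = - \sum_i a 0 i * \sum_p x 0 p * c p j i.
Proof. by rewrite mxE /pairing; congr (- _); apply: eq_bigr => i _; rewrite lieb_e_r. Qed.

Hypothesis Hinv : ad_invariant c (betaT r).

Lemma inv m u v : \sum_p B p v * c m p u + \sum_q B u q * c m q v = 0.
Proof.
have := congr1 (fun f : {ffun 'I_n * 'I_n -> R} => f (u,v)) (Hinv (e m)) => /=.
move=> H; rewrite sum_ffunE in H.
rewrite (eq_bigr _ (fun p _ => sum_ffunE _ _ _ _)) in H.
have addE : forall f g : {ffun 'I_n * 'I_n -> R}, (f + g) (u, v) = f (u, v) + g (u, v).
  by move=> f g; rewrite ffunE.
rewrite ffunE (eq_bigr (fun p => \sum_q (B p q * c m p u * e q 0 v + B p q * e p 0 u * c m q v))) in H; last first.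
  move=> p _; apply: eq_bigr => q _.
  by rewrite addE !ffunE /= !scaleE betaTE !lieb_ee.
rewrite (eq_bigr _ (fun p _ => big_split _ _ _ _ _)) big_split /= in H.
rewrite -[RHS]H; congr (_ + _).
  by apply: eq_bigr => p _; rewrite sum_er'.
rewrite exchange_big; apply: eq_bigr => q _.
rewrite -[LHS](sum_el' (fun p => B p q * c m q v) u).
by apply: eq_bigr => p _; rewrite mulrA [e p 0 u * _]mulrC.
Qed.

Lemma invL m u v : \sum_p B p v * c m p u = - \sum_q B u q * c m q v.
Proof. by apply/eqP; rewrite -addr_eq0 inv. Qed.

Lemma A_anti i j : A j i = - A i j.
Proof. by rewrite !AE -mulrN opprB. Qed.


Definition t1 (M N : 'I_n -> 'I_n -> R) u v w :=
  \sum_q \sum_t M u q * N v t * c q t w.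
Definition t2 (M N : 'I_n -> 'I_n -> R) u v w :=
  \sum_q \sum_s M u q * N s w * c q s v.
Definition t3 (M N : 'I_n -> 'I_n -> R) u v w :=
  \sum_p \sum_s M p v * N s w * c p s u.

Lemma I1 N u v w : t2 B N u v w + t3 B N u v w = 0.
Proof.
have E2 : t2 B N u v w = \sum_s N s w * \sum_q B u q * c q s v.
  rewrite /t2 exchange_big; apply: eq_bigr => s _; rewrite mulr_sumr.
  by apply: eq_bigr => q _; rewrite [RHS]mulrCA [RHS]mulrA.
have E3 : t3 B N u v w = - \sum_s N s w * \sum_q B u q * c q s v.
  rewrite /t3 exchange_big -sumrN; apply: eq_bigr => s _.
  have -> : \sum_q B u q * c q s v = \sum_p B p v * c s p u.
    rewrite invL -sumrN; apply: eq_bigr => q _.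
    by rewrite (c_anti s q) mulrN.
  rewrite mulr_sumr -sumrN; apply: eq_bigr => p _.
  by rewrite (c_anti p s) !mulrN opprK [RHS]mulrCA [RHS]mulrA.
by rewrite E2 E3 subrr.
Qed.

Lemma I2 u v w : t1 A B u v w + t2 A B u v w = 0.
Proof.
have E1 : t1 A B u v w = \sum_q A u q * \sum_t B v t * c q t w.
  rewrite /t1; apply: eq_bigr => q _; rewrite mulr_sumr.
  by apply: eq_bigr => t _; rewrite mulrA.
have E2 : t2 A B u v w = - \sum_q A u q * \sum_t B v t * c q t w.
  rewrite /t2 -sumrN; apply: eq_bigr => q _.
  rewrite -mulrN -invL mulr_sumr.
  by apply: eq_bigr => t _; rewrite [RHS]mulrA.
by rewrite E1 E2 subrr.
Qed.

Lemma I3 u v w : t1 B A u v w + t3 A B u v w = 0.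
Proof.
have E3 : t3 A B u v w = - \sum_p A p v * \sum_q B u q * c p q w.
  rewrite /t3 -sumrN; apply: eq_bigr => p _.
  rewrite -mulrN -invL mulr_sumr.
  by apply: eq_bigr => t _; rewrite [RHS]mulrA.
have E3' : t3 A B u v w = - t1 B A u v w.
  rewrite E3 /t1 exchange_big; congr (- _); apply: eq_bigr => p _.
  rewrite mulr_sumr; apply: eq_bigr => q _.
  rewrite (A_anti v p) (c_anti q p) mulrN mulrNN.
  by rewrite [LHS]mulrCA [LHS]mulrA.
by rewrite E3' subrr.
Qed.

Section Split.
Variables (M M1 M2 N N1 N2 : 'I_n -> 'I_n -> R) (u v w : 'I_n).
Hypothesis HM : forall i j, M i j = M1 i j + M2 i j.
Hypothesis HN : forall i j, N i j = N1 i j + N2 i j.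

Lemma t1_Dl : t1 M N u v w = t1 M1 N u v w + t1 M2 N u v w.
Proof.
rewrite /t1 -big_split; apply: eq_bigr => q _; rewrite -big_split.
by apply: eq_bigr => t _ /=; rewrite HM !mulrDl.
Qed.
Lemma t1_Dr : t1 N M u v w = t1 N M1 u v w + t1 N M2 u v w.
Proof.
rewrite /t1 -big_split; apply: eq_bigr => q _; rewrite -big_split.
by apply: eq_bigr => t _ /=; rewrite HM mulrDr mulrDl.
Qed.
Lemma t2_Dl : t2 M N u v w = t2 M1 N u v w + t2 M2 N u v w.
Proof.
rewrite /t2 -big_split; apply: eq_bigr => q _; rewrite -big_split.
by apply: eq_bigr => t _ /=; rewrite HM !mulrDl.
Qed.
Lemma t2_Dr : t2 N M u v w = t2 N M1 u v w + t2 N M2 u v w.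
Proof.
rewrite /t2 -big_split; apply: eq_bigr => q _; rewrite -big_split.
by apply: eq_bigr => t _ /=; rewrite HM mulrDr mulrDl.
Qed.
Lemma t3_Dl : t3 M N u v w = t3 M1 N u v w + t3 M2 N u v w.
Proof.
rewrite /t3 -big_split; apply: eq_bigr => q _; rewrite -big_split.
by apply: eq_bigr => t _ /=; rewrite HM !mulrDl.
Qed.
Lemma t3_Dr : t3 N M u v w = t3 N M1 u v w + t3 N M2 u v w.
Proof.
rewrite /t3 -big_split; apply: eq_bigr => q _; rewrite -big_split.
by apply: eq_bigr => t _ /=; rewrite HM mulrDr mulrDl.
Qed.
End Split.

Lemma key u v w : t1 r r u v w + t2 r r u v w + t3 r r u v w
  = t1 A A u v w + t2 A A u v w + t3 A A u v w + t1 B B u v w.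
Proof.
rewrite (@t1_Dl _ _ _ _ _ _ _ rAB) !(@t1_Dr _ _ _ _ _ _ _ rAB).
rewrite (@t2_Dl _ _ _ _ _ _ _ rAB) !(@t2_Dr _ _ _ _ _ _ _ rAB).
rewrite (@t3_Dl _ _ _ _ _ _ _ rAB) !(@t3_Dr _ _ _ _ _ _ _ rAB).
have /eqP := I1 A u v w; rewrite addr_eq0 => /eqP ->.
have /eqP := I1 B u v w; rewrite addr_eq0 => /eqP ->.
have /eqP := I2 u v w; rewrite addrC addr_eq0 => /eqP ->.
have /eqP := I3 u v w; rewrite addrC addr_eq0 => /eqP ->.
exact: grp.
Qed.
Lemma lie_gen (M N : 'I_n -> 'I_n -> R) (a b x y : 'rV[R]_n) w :
  (forall j, x 0 j = \sum_i a 0 i * M i j) -> (forall j, y 0 j = \sum_i b 0 i * N i j) ->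
  lieb c x y 0 w = \sum_u \sum_v a 0 u * b 0 v * t1 M N u v w.
Proof.
move=> Hx Hy; rewrite liebE.
pose G q t u v := a 0 u * b 0 v * (M u q * N v t * c q t w).
transitivity (\sum_q \sum_t \sum_u \sum_v G q t u v).
  apply: eq_bigr => q _; apply: eq_bigr => t _.
  rewrite Hx Hy mulr_suml mulr_suml; apply: eq_bigr => u _.
  rewrite mulr_sumr mulr_suml; apply: eq_bigr => v _.
  by rewrite /G mulrACA [RHS]mulrA.
rewrite sw23 sw12 sw34 sw23; apply: eq_bigr => u _; apply: eq_bigr => v _.
rewrite /t1 mulr_sumr; apply: eq_bigr => q _; rewrite mulr_sumr; by apply: eq_bigr.
Qed.
Lemma ad1 (a b : 'rV[R]_n) w :
  alpha r (adstar c (alpha r a) b) 0 w = - \sum_u \sum_v a 0 u * b 0 v * t2 A A u v w.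
Proof.
pose G j i p u := a 0 u * b 0 i * (A u p * A j w * c p j i).
transitivity (- \sum_j \sum_i \sum_p \sum_u G j i p u).
  rewrite alphaE -sumrN; apply: eq_bigr => j _; rewrite adstarE mulNr; congr (- _).
  rewrite mulr_suml; apply: eq_bigr => i _.
  rewrite mulr_sumr mulr_suml; apply: eq_bigr => p _.
  rewrite alphaE mulr_suml mulr_sumr mulr_suml; apply: eq_bigr => u _.
  exact: m5a.
rewrite sw34 sw23 sw12 sw23 sw34; congr (- _); apply: eq_bigr => u _; apply: eq_bigr => v _.
rewrite /t2 mulr_sumr; apply: eq_bigr => q _; rewrite mulr_sumr; by apply: eq_bigr.
Qed.

Lemma ad2 (a b : 'rV[R]_n) w :
  alpha r (adstar c (alpha r b) a) 0 w = \sum_u \sum_v a 0 u * b 0 v * t3 A A u v w.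
Proof.
pose G j i p v := a 0 i * b 0 v * (A p v * A j w * c p j i).
transitivity (\sum_j \sum_i \sum_p \sum_v G j i p v).
  rewrite alphaE; apply: eq_bigr => j _; rewrite adstarE mulNr -mulrN.
  rewrite mulr_suml; apply: eq_bigr => i _.
  rewrite mulr_sumr mulr_suml; apply: eq_bigr => p _.
  rewrite alphaE mulr_suml mulr_sumr mulr_suml; apply: eq_bigr => v _.
  rewrite /G (A_anti v p) !mulrN !mulNr !mulrN; congr (- _); exact: m5b.
rewrite sw12 sw34 sw23 sw34; apply: eq_bigr => u _; apply: eq_bigr => v _.
rewrite /t3 mulr_sumr; apply: eq_bigr => q _; rewrite mulr_sumr; by apply: eq_bigr.
Qed.
Lemma beta_ad (x b : 'rV[R]_n) : beta r (adstar c x b) = lieb c x (beta r b).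
Proof.
apply/rowP => w; rewrite betaE.
pose H j i p := - (b 0 i * x 0 p * (B j w * c p j i)).
transitivity (\sum_j \sum_i \sum_p H j i p).
  apply: eq_bigr => j _; rewrite adstarE mulNr mulr_suml -sumrN; apply: eq_bigr => i _.
  rewrite mulr_sumr mulr_suml sumrN; congr (- _); apply: eq_bigr => p _.
  by rewrite -!mulrA (mulrC (c p j i)).
rewrite exchange_big s3_23.
transitivity (\sum_i \sum_p \sum_q b 0 i * x 0 p * (B i q * c p q w)).
  apply: eq_bigr => i _; apply: eq_bigr => p _.
  by rewrite /H sumrN -!mulr_sumr invL mulrN opprK.
rewrite liebE exchange_big s3_23; apply: eq_bigr => p _; apply: eq_bigr => q _.
rewrite betaE mulr_sumr mulr_suml; apply: eq_bigr => i _.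
exact: m4.
Qed.
Lemma sum4E (T : finType) (F : 'I_n -> 'I_n -> 'I_n -> 'I_n -> {ffun T -> R}) x :
  (\sum_a \sum_b \sum_c' \sum_d F a b c' d) x = \sum_a \sum_b \sum_c' \sum_d F a b c' d x.
Proof.
rewrite sum_ffunE; apply: eq_bigr => a _; rewrite sum_ffunE; apply: eq_bigr => b _.
rewrite sum_ffunE; apply: eq_bigr => c' _; by rewrite sum_ffunE.
Qed.

Lemma tens3E (x y z : 'rV[R]_n) u v w : tens3 x y z (u, v, w) = x 0 u * y 0 v * z 0 w.
Proof. by rewrite ffunE. Qed.

Lemma r1213E u v w : r12_r13 c r (u, v, w) = t3 r r u v w.
Proof.
rewrite /r12_r13 sum4E.
transitivity (\sum_p \sum_q \sum_s (r p q * (r s w * c p s u)) * e q 0 v).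
  apply: eq_bigr => p _; apply: eq_bigr => q _; apply: eq_bigr => s _.
  rewrite -[RHS](sum_er' (fun t => r p q * (r s t * c p s u) * e q 0 v) w).
  by apply: eq_bigr => t _; rewrite tens3E liebZl liebZr !scaleE lieb_ee.
rewrite s3_23; apply: eq_bigr => p _; apply: eq_bigr => s _; by rewrite sum_er' mulrA.
Qed.

Lemma r1223E u v w : r12_r23 c r (u, v, w) = t2 r r u v w.
Proof.
rewrite /r12_r23 sum4E.
transitivity (\sum_p \sum_q \sum_s e p 0 u * (r p q * (r s w * c q s v))).
  apply: eq_bigr => p _; apply: eq_bigr => q _; apply: eq_bigr => s _.
  rewrite -[RHS](sum_er' (fun t => e p 0 u * (r p q * (r s t * c q s v))) w).
  apply: eq_bigr => t _; rewrite tens3E liebZr !scaleE lieb_ee.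
  by congr (_ * _); rewrite (mulrC (r p q)) -mulrA.
rewrite -[RHS](sum_el' (fun p => t2 r r p v w) u); apply: eq_bigr => p _.
rewrite /t2 mulr_sumr; apply: eq_bigr => q _; rewrite mulr_sumr; apply: eq_bigr => s _.
by rewrite -[in RHS]mulrA.
Qed.

Lemma r1323E (M : 'M[R]_n) u v w :
  (\sum_p \sum_q \sum_s \sum_t tens3 (M p q *: e p) (M s t *: e s) (lieb c (e q) (e t))) (u, v, w)
  = t1 M M u v w.
Proof.
rewrite sum4E.
transitivity (\sum_p \sum_q e p 0 u * \sum_s \sum_t e s 0 v * (M p q * M s t * c q t w)).
  apply: eq_bigr => p _; apply: eq_bigr => q _; rewrite mulr_sumr; apply: eq_bigr => s _.
  rewrite mulr_sumr; apply: eq_bigr => t _; rewrite tens3E !scaleE lieb_ee.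
  exact: m5c.
rewrite (eq_bigr (fun p => e p 0 u * \sum_q \sum_s \sum_t e s 0 v * (M p q * M s t * c q t w))); last by move=> p _; rewrite mulr_sumr.
rewrite sum_el' /t1; apply: eq_bigr => q _.
rewrite (eq_bigr (fun s => e s 0 v * \sum_t M u q * M s t * c q t w)); last by move=> s _; rewrite mulr_sumr.
by rewrite sum_el'.
Qed.
Lemma subE (M N : 'rV[R]_n) k : (M - N) 0 k = M 0 k - N 0 k.
Proof. by rewrite !mxE. Qed.

Lemma alphaB x y : alpha r (x - y) = alpha r x - alpha r y.
Proof.
apply/rowP => j; rewrite subE !alphaE -sumrB; apply: eq_bigr => i _.
by rewrite subE mulrBl.
Qed.

Lemma betaB x y : beta r (x - y) = beta r x - beta r y.
Proof.
apply/rowP => j; rewrite subE !betaE -sumrB; apply: eq_bigr => i _.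
by rewrite subE mulrBl.
Qed.

Lemma lieb_anti x y : lieb c y x = - lieb c x y.
Proof.
apply/rowP => k; rewrite [RHS]mxE !liebE exchange_big -sumrN; apply: eq_bigr => i _.
rewrite -sumrN; apply: eq_bigr => j _.
by rewrite (c_anti i j) mulrN (mulrC (y 0 j)).
Qed.

Lemma collapse2 (F : 'I_n -> 'I_n -> R) u v :
  \sum_i \sum_j e u 0 i * e v 0 j * F i j = F u v.
Proof.
rewrite -[RHS](sum_el (fun i => F i v) u); apply: eq_bigr => i _.
rewrite -(sum_el (fun j => F i j) v) mulr_sumr; apply: eq_bigr => j _.
by rewrite mulrA.
Qed.

Lemma P1_lhs a b w :
  (lieb c (alpha r a) (alpha r b)
     - alpha r (adstar c (alpha r a) b - adstar c (alpha r b) a)) 0 w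
  = \sum_u \sum_v a 0 u * b 0 v * (t1 A A u v w + t2 A A u v w + t3 A A u v w).
Proof.
rewrite subE alphaB subE ad1 ad2 (lie_gen _ (alphaE a) (alphaE b)).
rewrite opprB opprK addrA -!big_split; apply: eq_bigr => u _.
rewrite -!big_split; apply: eq_bigr => v _ /=.
by rewrite !mulrDr addrAC.
Qed.

Lemma P1_rhs a b w :
  lieb c (beta r a) (beta r b) 0 w = \sum_u \sum_v a 0 u * b 0 v * t1 B B u v w.
Proof. exact: lie_gen _ (betaE a) (betaE b). Qed.

Lemma P1_coord :
  (forall a b : 'rV[R]_n,
         lieb c (alpha r a) (alpha r b)
           - alpha r (adstar c (alpha r a) b - adstar c (alpha r b) a)
         = lieb c (beta r a) (beta r b)) <->
  (forall u v w, t1 A A u v w + t2 A A u v w + t3 A A u v w = t1 B B u v w).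
Proof.
split => H.
  move=> u v w; have := congr1 (fun x : 'rV[R]_n => x 0 w) (H (e u) (e v)) => /=.
  by rewrite P1_lhs P1_rhs !collapse2.
move=> a b; apply/rowP => w; rewrite P1_lhs P1_rhs.
by apply: eq_bigr => u _; apply: eq_bigr => v _; rewrite H.
Qed.

Lemma SE i j : (r + r^T) i j = 2 * B i j.
Proof. by rewrite !mxE BE mulrA divff ?mul1r // pnatr_eq0. Qed.

Lemma m_half (x y z : R) : 2^-1 * (2 * x * (2 * y) * z) = 2 * (x * y * z).
Proof. by rewrite -!mulrA mulKf ?pnatr_eq0 // mulrCA. Qed.

Lemma half_t1 u v w : 2^-1 * t1 (r + r^T) (r + r^T) u v w = 2 * t1 B B u v w.
Proof.
rewrite /t1 !mulr_sumr; apply: eq_bigr => q _; rewrite !mulr_sumr; apply: eq_bigr => t _.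
by rewrite !SE m_half.
Qed.

Lemma ord3 (x y z : R) : z + y + x = x + y + z.
Proof. by rewrite addrC (addrC z) addrA. Qed.

Lemma cybe_entry u v w :
  (r12_r13 c r + r12_r23 c r + r13_r23 c r) (u, v, w)
  = t1 r r u v w + t2 r r u v w + t3 r r u v w.
Proof. by rewrite !ffunE r1213E r1223E /r13_r23 r1323E ord3. Qed.

Lemma cybe_rhs u v w :
  [ffun t => 2^-1 * sym13_sym23 c r t] (u, v, w) = 2 * t1 B B u v w.
Proof. by rewrite ffunE /sym13_sym23 /= r1323E half_t1. Qed.

Lemma cybe_coord :
  CYBE2 c r <->
  (forall u v w, t1 A A u v w + t2 A A u v w + t3 A A u v w = t1 B B u v w).
Proof.
split => H.
  move=> u v w.
  have := congr1 (fun f : {ffun 'I_n * 'I_n * 'I_n -> R} => f (u, v, w)) H => /=.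
  rewrite cybe_entry cybe_rhs key mulr_natl mulr2n; exact: addIr.
apply/ffunP => -[[u v] w].
by rewrite cybe_entry cybe_rhs key H mulr_natl mulr2n.
Qed.
End Work.

Theorem corollary3p13 (R : realFieldType) (n : nat) (c : strconst R n)
  (r : 'M[R]_n) (Hlie : is_lie c) (Hinv : ad_invariant c (betaT r)) :
  [<-> CYBE2 c r;
       forall a b : 'rV[R]_n,
         lieb c (alpha r a) (alpha r b)
           - alpha r (adstar c (alpha r a) b - adstar c (alpha r b) a)
         = lieb c (beta r a) (beta r b);
       forall s : R, (s = 1 \/ s = -1) ->
         forall a b : 'rV[R]_n,
           alpha_i_beta r s (brdelta c r a b)
           = cbr c (alpha_i_beta r s a) (alpha_i_beta r s b)].
Proof.
have E1 := cybe_coord Hlie Hinv.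
have E2 := P1_coord c r.
tfae.
- by move=> H0; apply/E2/E1.
- move=> H1 s Hs a b.
  have ss : s * s = 1 by case: Hs => ->; rewrite ?mulr1 ?mulrNN ?mulr1.
  rewrite /alpha_i_beta /cbr /=; congr (_, _).
    rewrite liebZl liebZr scalerA ss scale1r -(H1 a b) opprB addrC subrK //.
  rewrite liebZr liebZl -scalerDr; congr (_ *: _).
  by rewrite /brdelta betaB !beta_ad // (lieb_anti Hlie (alpha r b) (beta r a)).
- move=> H2; apply/E1/E2 => a b.
  have := congr1 fst (H2 1 (or_introl erefl) a b); rewrite /= !scale1r => E.
  by rewrite -/(brdelta c r a b) E opprB addrC subrK.
Qed.
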